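(* Let $G$ be a connected threshold graph of order $n\ge 4$ and size $m$ with $n-1<m<\binom{n}{2}$, let $c$ be its number of type 1 vertices, $(b_1,\ldots,b_z)$ its backwards zero position sequence, $F_1=\sum_{i=1}^z b_i^2$, and $\rho$ the spectral radius of its adjacency matrix. Then \[\rho\ge\frac{c-2+\sqrt{c^2+\frac{4}{c-1}F_1}}{2}.\]
   Context: A threshold graph is a simple graph whose vertices can be ordered $v_1,\ldots,v_n$ so that for each $2\le i\le n$, $v_i$ is either adjacent to all of $v_1,\ldots,v_{i-1}$ (then $a_i=1$) or to none of them (then $a_i=0$); by convention $a_1=1$. Vertex $v_i$ is of type 1 if $a_i=1$ and of type 0 if $a_i=0$; $c$ and $z$ are the numbers of type 1 and type 0 vertices. The backwards zero position sequence $(b_1,\ldots,b_z)$ is defined by letting $b_i$ be the number of type 1 vertices appearing after the $i$-th type 0 vertex in the order $v_1,\ldots,v_n$. *)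

(* Defs.v *)
From mathcomp Require Import all_boot all_order all_algebra all_field.
Set Implicit Arguments. Unset Strict Implicit. Unset Printing Implicit Defensive.
Import Order.TTheory GRing.Theory Num.Theory.

(* A threshold graph on n vertices is given by its creation sequence
   a = [:: a_1; ...; a_n] (0-indexed in Rocq: a_{i+1} = nth false a i).
   Vertices are 'I_n (vertex i stands for v_{i+1}); for i < j, v_i ~ v_j
   iff a_j = 1, i.e. two distinct vertices are adjacent iff the later one
   has type 1. *)
Definition tg_adj (n : nat) (a : seq bool) : rel 'I_n :=
  fun i j => (i != j) && nth false a (maxn i j).

Definition tg_connected (n : nat) (a : seq bool) : Prop :=
  forall i j : 'I_n, connect (tg_adj a) i j.

Definition tg_size (n : nat) (a : seq bool) : nat :=
  #|[set p : 'I_n * 'I_n | (p.1 < p.2)%N && tg_adj a p.1 p.2]|.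

Definition tg_c (a : seq bool) : nat := count id a.

Definition tg_bseq (a : seq bool) : seq nat :=
  [seq count id (drop k.+1 a) | k <- iota 0 (size a) & ~~ nth true a k].

Definition tg_F1 (a : seq bool) : nat := \sum_(b <- tg_bseq a) b ^ 2.

Definition tg_adjmx (n : nat) (a : seq bool) : 'M[algC]_n :=
  \matrix_(i, j) ((tg_adj a i j)%:R)%R.

Local Open Scope ring_scope.

Definition is_spectral_radius (n : nat) (A : 'M[algC]_n) (rho : algC) : Prop :=
  (exists2 l, eigenvalue A l & `|l| = rho) /\
  (forall l, eigenvalue A l -> `|l| <= rho).

(* Main.v *)
Require Import Defs.
From mathcomp Require Import all_boot all_order all_algebra all_field.
From mathcomp Require Import zify ring.
Import Order.TTheory GRing.Theory Num.Theory.
Lemma count_drop_sum (s : seq bool) m :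
  count id (drop m s) = \sum_(m <= i < size s) nth false s i.
Proof.
elim: s m => [|x s IH] m; first by rewrite big_geq.
case: m => [|m] /=.
  by rewrite big_ltn //= big_add1 /= -(IH 0) drop0.
by rewrite big_add1 /= IH.
Qed.

Lemma sum_count (s : seq bool) : \sum_(0 <= i < size s) nth false s i = count id s.
Proof. by rewrite -count_drop_sum drop0. Qed.

Lemma pairs_count (s : seq bool) :
  2 * (\sum_(0 <= i < size s) nth false s i * count id (drop i.+1 s)) =
  count id s * (count id s - 1).
Proof.
elim: s => [|x s IH]; first by rewrite big_geq.
rewrite /= big_ltn //= big_add1 /= mulnDr IH.
rewrite drop0; case: x => /=; case: (count id s) => [|k]; nia.
Qed.

Local Open Scope ring_scope.
Lemma exch (f g : nat -> algC) n :
  \sum_(0 <= i < n) g i * (\sum_(0 <= j < i) f j) =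
  \sum_(0 <= j < n) f j * (\sum_(j.+1 <= i < n) g i).
Proof.
elim: n => [|n IH]; first by rewrite !big_geq.
rewrite big_nat_recr //= IH big_nat_recr //= [X in f n * X]big_geq // mulr0 addr0.
rewrite [RHS](@eq_big_nat _ _ _ 0 n _ (fun j => f j * (\sum_(j.+1 <= i < n) g i) + f j * g n)).
  by rewrite big_split /= -mulr_suml [_ * g n]mulrC.
by move=> j /andP[_ hj]; rewrite big_nat_recr //= mulrDr.
Qed.

Section Ray. Local Open Scope sesquilinear_scope.
Lemma rayleigh n (A : 'M[algC]_n) (rho : algC) (x : 'rV[algC]_n) :
  A \is normalmx -> (forall l, eigenvalue A l -> `|l| <= rho) ->
  'Re ((x *m A *m x ^t*) 0 0) <= rho * (x *m x ^t*) 0 0.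
Proof.
move=> /orthomx_spectralP.
set P := spectralmx A; set d := spectral_diag A => eA hr.
have PU : P \is unitarymx := spectral_unitarymx A.
have PP : P *m P^t* = 1%:M := unitarymxP PU.
have PinvE := invmx_unitary PU.
have Pu : P \in unitmx := spectral_unit A.
have P'P : P^t* *m P = 1%:M by rewrite -PinvE mulVmx.
set y := x *m P^t*.
have yE : y^t* = P *m x^t* by rewrite /y trmx_mul map_mxM trmxCK.
have e1 : x *m A *m x^t* = y *m diag_mx d *m y^t*.
  by rewrite {1}eA PinvE yE /y !mulmxA.
have e2 : x *m x^t* = y *m y^t*.
  by rewrite yE /y -!mulmxA (mulmxA _ P) P'P mul1mx.
have PA : P *m A = diag_mx d *m P.
  by rewrite {1}eA !mulmxA mulmxV // mul1mx.
have eig : forall i, `|d 0 i| <= rho.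
  move=> i; apply: hr; apply/eigenvalueP; exists (row i P).
    rewrite -row_mul PA mul_diag_mx; apply/rowP => j; rewrite !mxE.
    done.
  apply/eqP => h.
  have := congr1 (fun M => (M *m P^t*) 0 i) h.
  by rewrite -row_mul PP mul0mx !mxE eqxx /= => /eqP; rewrite oner_eq0.
clearbody y; rewrite e1 e2 mul_mx_diag !mxE raddf_sum /= mulr_sumr.
apply: ler_sum => j _; rewrite !mxE.
have -> : y 0 j * d 0 j * (y 0 j)^* = d 0 j * `|y 0 j| ^+ 2.
  by rewrite normCK mulrCA mulrA.
rewrite ReMr; last by rewrite realX // normr_real.
rewrite -normCK; apply: ler_wpM2r; first by rewrite exprn_ge0.
apply: le_trans (eig j); exact: (leif_Re_Creal _).1.
Qed.
End Ray.

Theorem theorem6p1 (n : nat) (a : seq bool) (rho : algC) :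
  size a = n ->
  nth false a 0 = true ->
  (4 <= n)%N ->
  tg_connected n a ->
  (n.-1 < tg_size n a < 'C(n, 2))%N ->
  is_spectral_radius (tg_adjmx n a) rho ->
  ((tg_c a)%:R - 2 + sqrtC ((tg_c a)%:R ^+ 2 + 4 / ((tg_c a)%:R - 1) * (tg_F1 a)%:R)) / 2
    <= rho.
Proof.
move=> sa a0 n4 _ _ [[l0 _ hl0] hmax].
have rho0 : 0 <= rho by rewrite -hl0.
set c := tg_c a. set F1 := tg_F1 a.
have c1 : (1 <= c)%N.
  by rewrite /c /tg_c -sum_count sa big_ltn ?a0 //; lia.
have [ceq1|cne1] := eqVneq c 1%N.
  rewrite ceq1 subrr invr0 mulr0 mul0r addr0 expr1n sqrtC1.
  have -> : (1 - 2 + 1 : algC) = 0 by ring.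
  by rewrite mul0r.
have c2 : (2 <= c)%N by rewrite ltn_neqAle eq_sym cne1 c1.
have n0 : (0 < n)%N by lia.
have cS : c = (1 + \sum_(1 <= i < n) nth false a i)%N.
  by rewrite /c /tg_c -sum_count sa big_ltn ?a0.
set C : algC := c%:R.
have CE : C - 1 = (c.-1)%:R.
  by rewrite /C -{1}(prednK (ltnW c2)) mulrSr addrK.
have CE2 : C - 2 = (c.-2)%:R.
  rewrite /C -{1}(subnK c2) natrD addrK; congr (_ %:R); lia.
have C1pos : 0 < C - 1 by rewrite CE ltr0n; lia.
have C1nz : C - 1 != 0 by rewrite CE pnatr_eq0; lia.
set D := C ^+ 2 + 4 / (C - 1) * F1%:R.
have D0 : 0 <= D.
  apply: addr_ge0; first by rewrite exprn_ge0 // /C ler0n.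
  by rewrite mulr_ge0 ?divr_ge0 ?ler0n ?(ltW C1pos).
set s := sqrtC D.
have s2 : s ^+ 2 = D := sqrtCK D.
have s0 : 0 <= s by rewrite /s sqrtC_ge0.
set lam := (C - 2 + s) / 2.
have lamR : lam \is Num.real.
  by rewrite /lam /C rpredM ?rpredV ?rpredD ?rpredB ?rpredN ?realn ?rpred1 // ?(ger0_real s0).
pose Fp := (c.-1 ^ 2 + F1)%N.
have key : (C - 1) * lam ^+ 2 = (C - 1) * (C - 2) * lam + Fp%:R.
  apply/eqP; rewrite -subr_eq0; apply/eqP.
  have -> : (C - 1) * lam ^+ 2 - ((C - 1) * (C - 2) * lam + Fp%:R) =
            (C - 1) / 4 * (s ^+ 2 - D).
    rewrite /lam /D /Fp natrD natrX -CE.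
    field.
    by rewrite -/C.
  by rewrite /s sqrtCK subrr mulr0.
pose w i := ((0 < i)%N && nth false a i).
pose b i := count id (drop i.+1 a).
pose xf i : algC := if w i then lam else (b i)%:R.
pose x : 'rV[algC]_n := \row_(i < n) xf i.
pose A := tg_adjmx n a.
have AT : map_mx Num.conj (trmx A) = A.
  apply/matrixP => i j; rewrite !mxE conjC_nat /tg_adj eq_sym maxnC.
  done.
have An : A \is normalmx by apply/normalmxP; rewrite AT.
have xT : map_mx Num.conj (trmx x) = trmx x.
  apply/matrixP => i j; rewrite !mxE /xf.
  by case: (w i); rewrite ?conjC_nat ?(conj_Creal lamR).
have R := @rayleigh n A rho x An hmax.
rewrite xT in R.
have bE : forall j, (j < n)%N -> (b j)%:R = \sum_(j.+1 <= i < n) (nth false a i)%:R :> algC.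
  by move=> j _; rewrite /b count_drop_sum sa natr_sum.
have NW : (\sum_(0 <= i < n) w i = c.-1)%N.
  rewrite big_ltn // {1}/w /= add0n.
  rewrite (@eq_big_nat _ _ _ 1 n _ (fun i => (nth false a i : nat))); first by rewrite cS add1n.
  by move=> i /andP[hi _]; rewrite /w hi.
have NF : (\sum_(0 <= i < n) (if w i then 0 else b i ^ 2) = Fp)%N.
  have b0 : b 0%N = c.-1 by rewrite /b count_drop_sum sa cS add1n.
  rewrite big_ltn // {1}/w /= b0 /Fp; congr (_ + _)%N.
  rewrite /F1 /tg_F1 /tg_bseq big_map big_filter sa.
  have -> : iota 0 n = index_iota 0 n by rewrite /index_iota subn0.
  rewrite [RHS]big_mkcond [RHS]big_ltn // (set_nth_default false) ?sa // a0 /= add0n.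
  apply: eq_big_nat => i /andP[hi hin]; rewrite /w hi (set_nth_default false) ?sa //.
  by case: (nth false a i).
have K2 : (2 * \sum_(0 <= i < n) (w i * b i) = c.-1 * c.-2)%N.
  have P := pairs_count a.
  have b0 : b 0%N = c.-1 by rewrite /b count_drop_sum sa cS add1n.
  rewrite sa big_ltn // a0 in P.
  rewrite big_ltn // {1}/w /= add0n.
  rewrite (@eq_big_nat _ _ _ 1 n _ (fun i => nth false a i * b i)%N); last first.
    by move=> i /andP[hi _]; rewrite /w hi.
  move: P; rewrite -/(tg_c a) -/c -/(b 0%N) b0.
  rewrite /b; move: (\sum_(1 <= i < n) _)%N => X; rewrite [nat_of_bool true]/= mul1n.
  move: c2; rewrite /c; case: (tg_c a) => [|[|d]] //= _; nia.
set K := (\sum_(0 <= i < n) (w i * b i))%N in K2.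
have NE : (x *m trmx x) 0 0 = (C - 1) * lam ^+ 2 + Fp%:R.
  rewrite mxE; under eq_bigr => j _ do rewrite /x !mxE.
  rewrite -(big_mkord xpredT (fun j => xf j * xf j)).
  rewrite (eq_bigr (fun j => lam ^+ 2 * (w j)%:R + (if w j then 0 else b j ^ 2)%N%:R)); last first.
    by move=> j _; rewrite /xf; case: (w j) => /=; rewrite ?mulr1 ?addr0 ?mulr0 ?add0r ?natrX ?expr2.
  by rewrite big_split /= -mulr_sumr -!natr_sum NW NF -CE mulrC.
have QE : (x *m A *m trmx x) 0 0 = lam * ((C - 1) * lam ^+ 2 + Fp%:R).
  rewrite mxE; under eq_bigr => k _ do rewrite /x !mxE.
  under eq_bigr => k _ do (under eq_bigr => i _ do rewrite /A /tg_adjmx !mxE). 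
  pose S k := \sum_(0 <= j < k) xf j.
  have inner : forall k : 'I_n, \sum_(i < n) xf i * (tg_adj a i k)%:R =
      (nth false a k)%:R * S k + lam * (b k)%:R.
    move=> k.
    pose G i := xf i * ((i != val k) && nth false a (maxn i k))%:R.
    rewrite (eq_bigr (fun i : 'I_n => G i)) //.
    rewrite -(big_mkord xpredT G).
    rewrite (@big_cat_nat _ _ _ k 0 n xpredT G (leq0n k) (ltnW (ltn_ord k))) /= (@big_ltn _ _ _ k n G (ltn_ord k)).
    have Gk : G k = 0 by rewrite /G eqxx mulr0.
    rewrite Gk add0r bE ?ltn_ord // mulr_sumr /S mulr_sumr.
    congr (_ + _); apply: eq_big_nat => i /andP[hi1 hi2].
      by rewrite /G (ltn_eqF hi2) (maxn_idPr (ltnW hi2)) mulrC.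
    rewrite /G (gtn_eqF hi1) (maxn_idPl (ltnW hi1)) /xf /w (leq_trans (ltn0Sn k) hi1) /=.
    by case: (nth false a i); rewrite ?mulr1 ?mulr0.
  rewrite (eq_bigr (fun k : 'I_n => ((nth false a k)%:R * S k + lam * (b k)%:R) * xf k)); last first.
    by move=> k _; rewrite inner.
  rewrite -(big_mkord xpredT (fun k => ((nth false a k)%:R * S k + lam * (b k)%:R) * xf k)).
  rewrite (@eq_big_nat _ _ _ 0 n _ (fun k => lam * ((w k)%:R * S k) + lam * (xf k * (b k)%:R))); last first.
    move=> k /andP[_ hk]; rewrite mulrDl; congr (_ + _); last first.
      by rewrite -mulrA [(b k)%:R * _]mulrC.
    case: k hk => [|k] hk; first by rewrite /S big_geq // !mulr0 mul0r.
    rewrite /xf /w /=; case: (nth false a k.+1); rewrite /= ?mulr1 ?mul1r ?mul0r ?mulr0 //.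
    by rewrite mulrC.
  rewrite big_split /= -!mulr_sumr /S exch.
  rewrite (@eq_big_nat _ _ _ 0 n _ (fun j => xf j * (b j)%:R)); last first.
    move=> j /andP[_ hj]; congr (_ * _); rewrite bE //.
    by apply: eq_big_nat => i /andP[hi _]; rewrite /w (leq_trans (ltn0Sn j) hi).
  have TE : \sum_(0 <= j < n) xf j * (b j)%:R = lam * K%:R + Fp%:R.
    rewrite (eq_bigr (fun j => lam * (w j * b j)%N%:R + (if w j then 0 else b j ^ 2)%N%:R)); last first.
      move=> j _; rewrite /xf; case: (w j) => /=;
      by rewrite ?mul1n ?mul0n ?natrX ?expr2 ?mulr0 ?addr0 ?add0r ?mulr0n.
    by rewrite big_split /= -mulr_sumr -!natr_sum NF.
  have K2R : (C - 1) * (C - 2) = 2 * K%:R by rewrite CE CE2 -natrM -K2 natrM.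
  rewrite TE key K2R; ring.
rewrite QE NE in R.
have Npos : 0 < (C - 1) * lam ^+ 2 + Fp%:R.
  apply: ltr_wpDl; first by rewrite mulr_ge0 ?(ltW C1pos) // -realEsqr.
  rewrite ltr0n /Fp; lia.
have hre := rpredM lamR (ger0_real (ltW Npos)).
move/Creal_ReP: hre => hre; move: R; rewrite hre.
by rewrite (ler_pM2r Npos).
Qed.
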